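(* Let $\Delta,\omega,t$ be integers with $\omega\ge2$ and $2\le t\le\omega$, and suppose $\omega-1$ divides $\Delta$. Then \[ f_t(\Delta,\omega)=\rho_t\Big(T\big(\Delta+\tfrac{\Delta}{\omega-1},\,\omega\big)\Big)=\frac1t\binom{\omega-1}{t-1}\Big(\frac{\Delta}{\omega-1}\Big)^{t-1}. \]
   Context: $\mathcal{G}(\Delta,\omega)$ denotes the class of finite simple graphs $G$ with maximum degree $\Delta(G)\le\Delta$ and clique number $\omega(G)\le\omega$. $k_t(G)$ is the number of copies of $K_t$ in $G$ and $\rho_t(G)=k_t(G)/|V(G)|$. $f_t(\Delta,\omega)=\sup\{\rho_t(G): G\in\mathcal{G}(\Delta,\omega),\ |V(G)|\ge 1\}$. $T(n,r)$ denotes the $r$-partite Turán graph on $n$ vertices: the complete $r$-partite graph on $n$ vertices whose part sizes are all $\lfloor n/r\rfloor$ or $\lceil n/r\rceil$. *)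

(* Defs.v *)
From HB Require Import structures.
From mathcomp Require Import all_boot all_order all_algebra.
Set Implicit Arguments. Unset Strict Implicit. Unset Printing Implicit Defensive.
Import Order.TTheory GRing.Theory Num.Theory.

Definition simple_graph (V : finType) (e : rel V) : Prop :=
  symmetric e /\ irreflexive e.

Definition deg (V : finType) (e : rel V) (v : V) : nat := #|[set u | e v u]|.

Definition is_clique (V : finType) (e : rel V) (S : {set V}) : bool :=
  [forall x in S, forall y in S, (x != y) ==> e x y].

Definition k_t (V : finType) (e : rel V) (t : nat) : nat :=
  #|[set S : {set V} | is_clique e S && (#|S| == t)]|.

Definition rho_t (V : finType) (e : rel V) (t : nat) : rat :=
  ((k_t e t)%:R / (#|V|)%:R)%R.

Definition in_class (Delta omega : nat) (V : finType) (e : rel V) : Prop :=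
  simple_graph e /\ (forall v : V, deg e v <= Delta) /\
  (forall S : {set V}, is_clique e S -> #|S| <= omega).

Definition is_f_t (t Delta omega : nat) (x : rat) : Prop :=
  (forall (V : finType) (e : rel V), in_class Delta omega e -> 0 < #|V| ->
     (rho_t e t <= x)%R) /\
  (forall y : rat,
     (forall (V : finType) (e : rel V), in_class Delta omega e -> 0 < #|V| ->
        (rho_t e t <= y)%R) -> (x <= y)%R).

(* Turan graph T(n, r): vertices 0..n-1, vertex i in part (i mod r),
   adjacent iff in different parts; part sizes are floor(n/r) or ceil(n/r). *)
Definition turan_rel (n r : nat) : rel 'I_n :=
  fun i j => (i %% r) != (j %% r).
Arguments turan_rel : clear implicits.

(* Main.v *)
Require Import Defs.
From HB Require Import structures.
From mathcomp Require Import all_boot all_order all_algebra.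
From mathcomp Require Import lra ring zify.
Set Implicit Arguments. Unset Strict Implicit. Unset Printing Implicit Defensive.
Import Order.TTheory GRing.Theory Num.Theory.
Local Open Scope ring_scope.
Lemma bernoulli (a h : rat) (n : nat) : 0 <= a -> 0 <= a + h ->
  a ^+ n.+1 + n.+1%:R * a ^+ n * h <= (a + h) ^+ n.+1.
Proof.
move=> ha hah; elim: n => [|n IH]; first by rewrite !expr1 expr0; lra.
rewrite (exprS (a + h)).
have := ler_wpM2l hah IH => H.
apply: le_trans H.
have han : 0 <= a ^+ n := exprn_ge0 n ha.
have : 0 <= n.+1%:R * a ^+ n * (h * h).
  apply: mulr_ge0; last by rewrite -expr2 sqr_ge0.
  by apply: mulr_ge0.
rewrite !exprS -!natr1 => H2.
set A := a ^+ n in H2 *.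
set N := n%:R in H2 *.
have -> : (a + h) * (a * A + (N + 1) * A * h) = a * (a * A) + (N + 1 + 1) * (a * A) * h + (N + 1) * A * (h * h) by ring.
lra.

Qed.
Definition Esym (V : finType) (x : V -> rat) (r : nat) (U : {set V}) : rat :=
  \sum_(S : {set V} | (S \subset U) && (#|S| == r)) \prod_(v in S) x v.

Lemma Esym0 (V : finType) (x : V -> rat) U : Esym x 0 U = 1.
Proof.
rewrite /Esym (eq_bigl (pred1 set0)) ?big_pred1_eq ?big_set0 // => S /=.
rewrite cards_eq0; apply/andP/eqP => [[_ /eqP //]|->]; by rewrite sub0set.
Qed.

Lemma Esym_set0 (V : finType) (x : V -> rat) r : Esym x r.+1 set0 = 0.
Proof.
rewrite /Esym big_pred0 // => S; rewrite subset0.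
by apply/negP => /andP[/eqP -> ]; rewrite cards0.
Qed.

Lemma Esym_split (V : finType) (x : V -> rat) r (U : {set V}) (y : V) : y \in U ->
  Esym x r.+1 U = Esym x r.+1 (U :\ y) + x y * Esym x r (U :\ y).
Proof.
move=> yU; rewrite /Esym (bigID (fun S : {set V} => y \in S)) /= addrC; congr (_ + _).
  by apply: eq_bigl => S; rewrite subsetD1; case: (y \in S); rewrite ?andbT ?andbF //= andbAC.
rewrite (reindex_onto (fun S' => y |: S') (fun S => S :\ y)) /=; last first.
  by move=> S /andP[_ hy]; rewrite setD1K.
rewrite mulr_sumr; apply: eq_big => S'.
  rewrite subsetD1 setU11 andbT.
  case hy: (y \in S'); rewrite /=.
    rewrite andbF /=; apply/negbTE; apply/negP => /andP[_ /eqP H].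
    by have := setD11 y (y |: S'); rewrite H hy.
  rewrite setU1K ?hy // eqxx andbT cardsU1 hy add1n eqSS.
  by rewrite subUset sub1set yU andbT.
move=> /andP[_ /eqP H]; rewrite big_setU1 //=.
by apply/negP => hy; have := setD11 y (y |: S'); rewrite H hy.
Qed.

Lemma maclaurin (V : finType) (x : V -> rat) (hx : forall v, 0 <= x v) :
  forall n (U : {set V}) r, #|U| = n ->
  Esym x r U <= ('C(n, r))%:R * ((\sum_(v in U) x v) / n%:R) ^+ r.
Proof.
elim=> [|n IH] U r hU.
  have -> := cards0_eq hU.
  case: r => [|r]; first by rewrite Esym0 bin0 expr0 mulr1.
  by rewrite Esym_set0 bin0n mul0r.
case: r => [|r]; first by rewrite Esym0 bin0 expr0 mulr1.
have : U != set0 by rewrite -card_gt0 hU.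
case/set0Pn => y yU.
have hU' : #|U :\ y| = n by move: hU; rewrite (cardsD1 y) yU => -[].
rewrite (Esym_split _ _ yU) (big_setD1 y yU) /=.
set T := \sum_(i in U :\ y) x i.
set u := T / n%:R.
have h1 := IH (U :\ y) r.+1 hU'.
have h0 := IH (U :\ y) r hU'.
rewrite -/T -/u in h1 h0.
have T0 : 0 <= T by apply: sumr_ge0.
have u0 : 0 <= u by apply: divr_ge0 => //; apply: ler0n.
have Tnu : T = n%:R * u.
  case: (posnP n) => [n0|np].
    by rewrite /T n0 in hU' *; rewrite (cards0_eq hU') big_set0 mul0r.
  rewrite /u mulrC divfK //; by rewrite pnatr_eq0 -lt0n.
set y' := x y.
have y0 : 0 <= y' := hx y.
set h := (y' - u) / n.+1%:R.
have n1 : n.+1%:R != 0 :> rat by rewrite pnatr_eq0.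
have uh : u + h = (y' + T) / n.+1%:R.
  by rewrite /h Tnu; field; rewrite addrC natr1.
have uh0 : 0 <= u + h.
  by rewrite uh; apply: divr_ge0; [exact: addr_ge0 | exact: ler0n].
have B := bernoulli r u0 uh0.
rewrite -uh.
apply: le_trans (_ : 'C(n, r.+1)%:R * u ^+ r.+1 + y' * ('C(n, r)%:R * u ^+ r) <= _).
  by apply: lerD => //; apply: ler_wpM2l.
apply: le_trans (ler_wpM2l (ler0n _ _) B).
have cab : 'C(n.+1, r.+1)%:R = 'C(n, r.+1)%:R + 'C(n, r)%:R :> rat by rewrite binS natrD.
have cR : 'C(n.+1, r.+1)%:R * r.+1%:R = n.+1%:R * 'C(n, r)%:R :> rat.
  by rewrite -!natrM mulnC -(mul_bin_diag n.+1 r).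
rewrite !exprS.
set w := u ^+ r.
set c := 'C(n.+1, r.+1)%:R in cab cR *.
have -> : c * (u * w + r.+1%:R * w * h) = c * (u * w) + (c * r.+1%:R) * (w * h) by ring.
rewrite cR {1}cab /h.
by rewrite le_eqVlt; apply/orP; left; apply/eqP; field; rewrite addrC natr1.
Qed.
Lemma binpow_step (m r : nat) (S : rat) : 0 <= S ->
  ('C(m, r))%:R * (S / m%:R) ^+ r <= ('C(m.+1, r))%:R * (S / m.+1%:R) ^+ r.
Proof.
move=> S0.
have R0 : 0 <= ('C(m.+1, r))%:R * (S / m.+1%:R) ^+ r.
  by apply: mulr_ge0; [exact: ler0n | apply: exprn_ge0; apply: divr_ge0 => //; exact: ler0n].
case: (posnP m) => [m0|mp].
  rewrite m0 in R0 *.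
  by case: r R0 => [|r] R0; rewrite ?bin0 ?expr0 // bin0n mul0r.
case: r R0 => [|r] R0; first by rewrite !bin0 !expr0.
case: (ltnP m r.+1) => [lt|le]; first by rewrite bin_small // mul0r.
set a := m.+1%:R : rat.
have ma : m%:R = a - 1 by rewrite /a -natr1; ring.
have m0 : 0 < m%:R :> rat by rewrite ltr0n.
have a0 : 0 < a by rewrite /a ltr0n.
have id1 : ('C(m, r.+1))%:R * a = (a - r.+1%:R) * ('C(m.+1, r.+1))%:R.
  have := mul_bin_down m.+1 r.+1; rewrite /= => /(congr1 (fun k => k%:R : rat)).
  have hr : (r.+1 <= m.+1)%N by rewrite ltnS ltnW.
  by rewrite !natrM natrB // => <-; rewrite mulrC.
have bern : a ^+ r * (a - r.+1%:R) <= m%:R ^+ r.+1.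
  have := @bernoulli a (-1) r (ltW a0); rewrite ma.
  move=> H; apply: le_trans (H _); last by rewrite -ma ltW.
  by rewrite exprS le_eqVlt; apply/orP; left; apply/eqP; ring.
have key : ('C(m, r.+1))%:R * a ^+ r.+1 <= ('C(m.+1, r.+1))%:R * m%:R ^+ r.+1.
  rewrite exprS mulrA id1.
  have -> : (a - r.+1%:R) * 'C(m.+1, r.+1)%:R * a ^+ r = 'C(m.+1, r.+1)%:R * (a ^+ r * (a - r.+1%:R)) by ring.
  by apply: ler_wpM2l => //; exact: ler0n.
set K := S ^+ r.+1 / (m%:R ^+ r.+1 * a ^+ r.+1).
have K0 : 0 <= K.
  apply: divr_ge0; first exact: exprn_ge0.
  by apply: mulr_ge0; apply: exprn_ge0; apply: ltW.
have e1 : ('C(m, r.+1))%:R * (S / m%:R) ^+ r.+1 = ('C(m, r.+1))%:R * a ^+ r.+1 * K.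
  rewrite /K !expr_div_n; field.
  by apply/andP; split; apply: expf_neq0; apply: lt0r_neq0.
have e2 : ('C(m.+1, r.+1))%:R * (S / a) ^+ r.+1 = ('C(m.+1, r.+1))%:R * m%:R ^+ r.+1 * K.
  rewrite /K !expr_div_n; field.
  by apply/andP; split; apply: expf_neq0; apply: lt0r_neq0.
rewrite e1 e2; exact: ler_wpM2r.
Qed.
Lemma cliqueP (V : finType) (e : rel V) (S : {set V}) u w :
  is_clique e S -> u \in S -> w \in S -> u != w -> e u w.
Proof.
move=> /forall_inP /(_ u) H uS wS uw.
by have /forall_inP /(_ w wS) /implyP /(_ uw) := H uS.
Qed.

Lemma clique_sub (V : finType) (e : rel V) (S U : {set V}) :
  is_clique e U -> S \subset U -> is_clique e S.
Proof.
move=> cU /subsetP sSU; apply/forall_inP => u uS; apply/forall_inP => w wS.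
by apply/implyP => uw; apply: (cliqueP cU); rewrite ?sSU.
Qed.

Definition Lag (V : finType) (e : rel V) (r : nat) (x : V -> rat) : rat :=
  \sum_(S : {set V} | is_clique e S && (#|S| == r)) \prod_(v in S) x v.

Definition supp (V : finType) (x : V -> rat) : {set V} := [set v | x v != 0].

Definition mv (V : finType) (x : V -> rat) (a b : V) : V -> rat :=
  fun v => if v == a then x a + x b else if v == b then 0 else x v.

Lemma prod_mv_in (V : finType) (x : V -> rat) a b (S : {set V}) :
  a \in S -> b \notin S ->
  \prod_(v in S) mv x a b v = (x a + x b) * \prod_(v in S :\ a) x v.
Proof.
move=> aS bS; rewrite (big_setD1 a aS) /= /mv eqxx; congr (_ * _).
apply: eq_bigr => v; rewrite in_setD1 => /andP[va vS]; rewrite (negbTE va).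
by case: eqP => // vb; rewrite -vb vS in bS.
Qed.

Lemma prod_mv_out (V : finType) (x : V -> rat) a b (S : {set V}) :
  a \notin S -> b \in S -> \prod_(v in S) mv x a b v = 0.
Proof.
move=> aS bS; rewrite (big_setD1 b bS) /= /mv eqxx.
by case: eqP => [ba|_]; [rewrite -ba bS in aS | rewrite mul0r].
Qed.

Lemma prod_mv_none (V : finType) (x : V -> rat) a b (S : {set V}) :
  a \notin S -> b \notin S -> \prod_(v in S) mv x a b v = \prod_(v in S) x v.
Proof.
move=> aS bS; apply: eq_bigr => v vS; rewrite /mv.
case: eqP => [va|_]; first by rewrite -va vS in aS.
by case: eqP => [vb|_] //; rewrite -vb vS in bS.
Qed.

Lemma term_id (V : finType) (x : V -> rat) u w (S : {set V}) :
  ~~ ((u \in S) && (w \in S)) ->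
  (x u + x w) * \prod_(v in S) x v =
  x u * \prod_(v in S) mv x u w v + x w * \prod_(v in S) mv x w u v.
Proof.
case uS: (u \in S); case wS: (w \in S) => //= _.
- rewrite (@prod_mv_in _ x u w S) ?uS ?wS // (@prod_mv_out _ x w u S) ?uS ?wS //.
  rewrite (big_setD1 u) ?uS //=; ring.
- rewrite (@prod_mv_in _ x w u S) ?uS ?wS // (@prod_mv_out _ x u w S) ?uS ?wS //.
  rewrite (big_setD1 w) ?wS //=; ring.
- rewrite !prod_mv_none ?uS ?wS //; ring.
Qed.

Lemma lag_id (V : finType) (e : rel V) r (x : V -> rat) u w :
  u != w -> ~~ e u w ->
  (x u + x w) * Lag e r x = x u * Lag e r (mv x u w) + x w * Lag e r (mv x w u).
Proof.
move=> uw euw; rewrite /Lag !mulr_sumr -big_split /=.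
apply: eq_bigr => S /andP[cS _]; apply: term_id.
apply/negP => /andP[uS wS]; by rewrite (cliqueP cS uS wS uw) in euw.
Qed.

Lemma sum_mv (V : finType) (x : V -> rat) a b : a != b ->
  \sum_v mv x a b v = \sum_v x v.
Proof.
move=> ab; have ba : b != a by rewrite eq_sym.
have E : forall f : V -> rat,
    \sum_v f v = f a + (f b + \sum_(v | (v != a) && (v != b)) f v).
  by move=> f; rewrite (bigD1 a) //=; congr (_ + _); rewrite (bigD1 b).
rewrite !E.
rewrite /mv eqxx (negbTE ba) eqxx.
rewrite (eq_bigr x); first by ring.
by move=> v /andP[va vb]; rewrite (negbTE va) (negbTE vb).
Qed.

Lemma mv_ge0 (V : finType) (x : V -> rat) a b : (forall v, 0 <= x v) ->
  forall v, 0 <= mv x a b v.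
Proof.
move=> hx v; rewrite /mv; case: ifP => _; first exact: addr_ge0.
by case: ifP.
Qed.

Lemma supp_mv (V : finType) (x : V -> rat) a b : a \in supp x -> a != b ->
  supp (mv x a b) \subset supp x :\ b.
Proof.
move=> aU ab; apply/subsetP => v; rewrite !inE /mv.
case: (eqVneq v a) => [->|va]; first by rewrite ab; move: aU; rewrite inE.
case: (eqVneq v b) => [->|vb] //=; by rewrite eqxx.
Qed.

Lemma binpow_mono (q p r : nat) (S : rat) : 0 <= S -> (q <= p)%N ->
  ('C(q, r))%:R * (S / q%:R) ^+ r <= ('C(p, r))%:R * (S / p%:R) ^+ r.
Proof.
move=> S0; elim: p => [|p IH]; first by rewrite leqn0 => /eqP ->.
rewrite leq_eqVlt => /orP[/eqP ->|lt] //.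
exact: le_trans (IH lt) (binpow_step _ _ S0).
Qed.

Lemma sum_supp (V : finType) (x : V -> rat) : \sum_(v in supp x) x v = \sum_v x v.
Proof.
rewrite big_mkcond /=; apply: eq_bigr => v _; rewrite inE.
by case: eqP.
Qed.

Lemma clique_case (V : finType) (e : rel V) (p r : nat) (x : V -> rat) :
  (forall v, 0 <= x v) -> is_clique e (supp x) -> (#|supp x| <= p)%N ->
  Lag e r x <= ('C(p, r))%:R * ((\sum_v x v) / p%:R) ^+ r.
Proof.
move=> hx cU hp.
have -> : Lag e r x = Esym x r (supp x).
  rewrite /Lag /Esym [LHS]big_mkcond [RHS]big_mkcond /=; apply: eq_bigr => S _.
  case sub: (S \subset supp x).
    by rewrite (clique_sub cU sub).
  case: ifP => // _.
  have /subsetPn [v vS vU] : ~~ (S \subset supp x) by rewrite sub.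
  rewrite (big_setD1 v vS) /=.
  by move: vU; rewrite inE negbK => /eqP ->; rewrite mul0r.
apply: le_trans (maclaurin hx r (erefl #|supp x|)) _.
rewrite sum_supp; apply: binpow_mono => //.
exact: sumr_ge0.
Qed.

Lemma lag_bound (V : finType) (e : rel V) (p r : nat) :
  forall n (x : V -> rat), (#|supp x| <= n)%N -> (forall v, 0 <= x v) ->
  (forall S : {set V}, is_clique e S -> S \subset supp x -> (#|S| <= p)%N) ->
  Lag e r x <= ('C(p, r))%:R * ((\sum_v x v) / p%:R) ^+ r.
Proof.
elim=> [|n IH] x hn hx hc.
  have cU : is_clique e (supp x).
    by move: hn; rewrite leqn0 => /eqP/cards0_eq ->; apply/forall_inP => v; rewrite inE.
  by apply: clique_case => //; apply: hc.
case cU: (is_clique e (supp x)).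
  by apply: clique_case => //; apply: hc.
have /forall_inPn [u uU] := negbT cU.
move=> /forall_inPn [w wU]; rewrite negb_imply => /andP[uw euw].
have wu : w != u by rewrite eq_sym.
have Hx : forall a b, a \in supp x -> b \in supp x -> a != b ->
    Lag e r (mv x a b) <= ('C(p, r))%:R * ((\sum_v x v) / p%:R) ^+ r.
  move=> a b aU bU ab; rewrite -(sum_mv x ab).
  have sub := supp_mv aU ab.
  apply: IH.
  - apply: leq_trans (subset_leq_card sub) _.
    by move: hn; rewrite (cardsD1 b (supp x)) bU.
  - exact: mv_ge0.
  - move=> S cS sS; apply: hc cS _.
    by apply: subset_trans sS (subset_trans sub (subD1set _ _)).
have hu := Hx u w uU wU uw.
have hw := Hx w u wU uU wu.
have xu : 0 < x u by rewrite lt0r; move: uU; rewrite inE => ->; exact: hx.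
have xw : 0 < x w by rewrite lt0r; move: wU; rewrite inE => ->; exact: hx.
have s0 : 0 < x u + x w by exact: addr_gt0.
rewrite -(ler_pM2l s0) (lag_id r x uw euw).
set M := ('C(p, r))%:R * _.
rewrite mulrDl; apply: lerD; apply: ler_wpM2l => //; exact: ltW.
Qed.

Lemma prod_ind (V : finType) (S N : {set V}) :
  \prod_(u in S) ((u \in N)%:R : rat) = (S \subset N)%:R.
Proof.
case sub: (S \subset N).
  by apply: big1 => u uS; rewrite (subsetP (idP sub) u uS).
have /subsetPn [u uS uN] : ~~ (S \subset N) by rewrite sub.
by rewrite (big_setD1 u uS) /= (negbTE uN) mul0r.
Qed.

Lemma card_star (V : finType) (e : rel V) (v : V) (t : nat) :
  simple_graph e ->
  #|[set S : {set V} | (is_clique e S && (#|S| == t.+1)) && (v \in S)]| =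
  #|[set S : {set V} | (is_clique e S && (#|S| == t)) && (S \subset [set u | e v u])]|.
Proof.
move=> [sym irr].
set A := [set S : {set V} | _].
set B := [set S : {set V} | _].
have inj : {in A &, injective (fun S : {set V} => S :\ v)}.
  move=> S1 S2; rewrite !inE => /andP[_ h1] /andP[_ h2] E.
  by rewrite -(setD1K h1) -(setD1K h2) E.
rewrite -(card_in_imset inj); apply: eq_card => S'; rewrite [in RHS]inE.
apply/imsetP/idP.
  move=> [S]; rewrite inE => /andP[/andP[cS /eqP sS] vS] ->.
  rewrite (clique_sub cS (subD1set S v)) /=.
  apply/andP; split.
    by move: sS; rewrite (cardsD1 v) vS add1n => -[->].
  apply/subsetP => u; rewrite !inE => /andP[uv uS].
  by apply: (cliqueP cS vS uS); rewrite eq_sym.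
move=> /andP[/andP[cS' /eqP sS'] sub].
have vS' : v \notin S'.
  by apply/negP => /(subsetP sub); rewrite inE irr.
exists (v |: S'); last by rewrite setU1K.
rewrite inE setU11 andbT cardsU1 vS' sS' eqxx andbT.
apply/forall_inP => a; rewrite !inE => aS; apply/forall_inP => b; rewrite !inE => bS.
apply/implyP => ab.
case/orP: aS => [/eqP av|aS].
  subst a; case/orP: bS => [/eqP bv|bS]; first by move: ab; rewrite bv eqxx.
  by move: (subsetP sub b bS); rewrite inE.
case/orP: bS => [/eqP bv|bS].
  by subst b; rewrite sym; move: (subsetP sub a aS); rewrite inE.
exact: (cliqueP cS' aS bS ab).
Qed.

Lemma clique_add (V : finType) (e : rel V) (v : V) (S : {set V}) :
  simple_graph e -> is_clique e S -> S \subset [set u | e v u] ->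
  v \notin S /\ is_clique e (v |: S).
Proof.
move=> [sym irr] cS sub.
have vS : v \notin S by apply/negP => /(subsetP sub); rewrite inE irr.
split => //.
apply/forall_inP => a; rewrite !inE => aS; apply/forall_inP => b; rewrite !inE => bS.
apply/implyP => ab.
case/orP: aS => [/eqP av|aS].
  subst a; case/orP: bS => [/eqP bv|bS]; first by move: ab; rewrite bv eqxx.
  by move: (subsetP sub b bS); rewrite inE.
case/orP: bS => [/eqP bv|bS].
  by subst b; rewrite sym; move: (subsetP sub a aS); rewrite inE.
exact: (cliqueP cS aS bS ab).
Qed.

Lemma vertex_bound (V : finType) (e : rel V) (Delta omega r : nat) (v : V) :
  in_class Delta omega e ->
  (#|[set S : {set V} | (is_clique e S && (#|S| == r.+1)) && (v \in S)]|%:R : rat)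
  <= ('C(omega - 1, r))%:R * (Delta%:R / (omega - 1)%:R) ^+ r.
Proof.
move=> [sg [hdeg hcl]]; rewrite card_star //.
set N := [set u | e v u].
set x := fun u => ((u \in N)%:R : rat).
have Lx : Lag e r x = #|[set S : {set V} | (is_clique e S && (#|S| == r)) && (S \subset N)]|%:R.
  rewrite /Lag; under eq_bigr => S _ do rewrite prod_ind.
  rewrite -natr_sum -big_mkcondr /= sum1_card.
  by congr (_%:R); apply: eq_card => S; rewrite inE.
have supp_x : supp x = N.
  by apply/setP => u; rewrite [in LHS]inE /x; case: (u \in N).
have hx : forall u, 0 <= x u by move=> u; exact: ler0n.
have hc : forall S : {set V}, is_clique e S -> S \subset supp x -> (#|S| <= omega - 1)%N.
  move=> S cS; rewrite supp_x => sub.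
  have [vS cvS] := clique_add sg cS sub.
  have := hcl _ cvS; rewrite cardsU1 vS; lia.
have hl := @lag_bound V e (omega - 1) r _ x (leqnn #|supp x|) hx hc.
have sx : \sum_u x u = (deg e v)%:R.
  rewrite /x -natr_sum; congr (_%:R).
  by rewrite /deg -sum1_card [RHS]big_mkcond; apply: eq_bigr => i _; case: (i \in N).
rewrite -Lx; apply: le_trans hl _; rewrite sx.
apply: ler_wpM2l; first exact: ler0n.
apply: lerXn2r; rewrite ?nnegrE ?divr_ge0 ?ler0n //.
by apply: ler_wpM2r; [rewrite invr_ge0 ler0n | rewrite ler_nat].
Qed.

Lemma double_count (V : finType) (e : rel V) (t : nat) :
  \sum_(v : V) #|[set S : {set V} | (is_clique e S && (#|S| == t)) && (v \in S)]|
  = (k_t e t * t)%N.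
Proof.
set K := [set S : {set V} | is_clique e S && (#|S| == t)].
have cA : forall v : V,
    #|[set S : {set V} | (is_clique e S && (#|S| == t)) && (v \in S)]| =
    \sum_(S in K) ((v \in S) : nat).
  move=> v; rewrite -sum1_card big_mkcond [RHS]big_mkcond /=.
  by apply: eq_bigr => S _; rewrite !inE; case: (is_clique e S && _); case: (v \in S).
under eq_bigr => v _ do rewrite cA.
rewrite exchange_big /= /k_t -/K -sum_nat_const.
apply: eq_bigr => S; rewrite inE => /andP[_ /eqP <-].
rewrite -sum1_card [RHS]big_mkcond /=.
by apply: eq_bigr => v _; case: (v \in S).
Qed.

Lemma rho_bound (V : finType) (e : rel V) (Delta omega r : nat) :
  in_class Delta omega e -> (0 < #|V|)%N ->
  rho_t e r.+1 <= (r.+1%:R)^-1 * ('C(omega - 1, r))%:R * (Delta%:R / (omega - 1)%:R) ^+ r.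
Proof.
move=> hc V0.
rewrite -mulrA.
set B := (('C(omega - 1, r))%:R * (Delta%:R / (omega - 1)%:R) ^+ r : rat).
have H : ((k_t e r.+1 * r.+1)%N%:R : rat) <= #|V|%:R * B.
  have -> : #|V|%:R * B = \sum_(v : V) B by rewrite sumr_const mulr_natl.
  rewrite -double_count natr_sum.
  by apply: ler_sum => v _; exact: vertex_bound.
have N0 : 0 < #|V|%:R :> rat by rewrite ltr0n.
have r0 : 0 < r.+1%:R :> rat by rewrite ltr0n.
rewrite /rho_t ler_pdivrMr // -mulrA ler_pdivlMl //.
by rewrite natrM mulrC in H; rewrite [B * _]mulrC.
Qed.

Lemma foldr_const (T : Type) (f : T -> nat) (s : nat) (l : seq T) :
  (forall x, f x = s) -> foldr muln 1%N (map f l) = (s ^ size l)%N.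
Proof. by move=> H; elim: l => //= a l ->; rewrite H expnS. Qed.

Lemma fiber_count (V : finType) (k : nat) (col : V -> 'I_k) (e : rel V)
  (He : forall u v, e u v = (col u != col v)) (s : nat)
  (Hs : forall a, #|[set v | col v == a]| = s) (y0 : V) (P : {set 'I_k}) :
  #|[set S : {set V} | (is_clique e S && (#|S| == #|P|)) && (col @: S == P)]| = (s ^ #|P|)%N.
Proof.
set F := fun a : 'I_k => [set v | col v == a].
have -> : (s ^ #|P|)%N = #|pfamily y0 P F|.
  by rewrite card_pfamily (foldr_const _ (fun a => Hs a)) -cardE.
have gaP : forall g, g \in pfamily y0 P F -> forall a, a \in P -> col (g a) = a.
  by move=> g /pfamilyP[_ H] a aP; have := H a aP; rewrite inE => /eqP.
have gout : forall g, g \in pfamily y0 P F -> forall a, a \notin P -> g a = y0.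
  move=> g /pfamilyP[/subsetP H _] a aP; apply/eqP; apply/negP => /negP nz.
  by have := H a; rewrite inE nz => /(_ isT); rewrite (negbTE aP).
have inj : {in pfamily y0 P F &, injective (fun g : {ffun 'I_k -> V} => g @: P)}.
  move=> g1 g2 h1 h2 /= E; apply/ffunP => a.
  case aP: (a \in P); last by rewrite !gout ?aP.
  have : g1 a \in g2 @: P by rewrite -E imset_f.
  case/imsetP => b bP gb.
  have ab : a = b by rewrite -(gaP _ h1 a aP) gb (gaP _ h2 b bP).
  by rewrite gb ab.
rewrite -(card_in_imset inj); apply: eq_card => S; rewrite [in LHS]inE.
apply/idP/imsetP.
  move=> /andP[/andP[cS _] /eqP cSP].
  have same : forall u v, u \in S -> v \in S -> col u = col v -> u = v.
    move=> u v uS vS cuv; apply/eqP; apply/negP => /negP uv.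
    by have := cliqueP cS uS vS uv; rewrite He cuv eqxx.
  set g := [ffun a => if [pick v in S | col v == a] is Some v then v else y0].
  have gP : forall a, a \in P -> g a \in S /\ col (g a) = a.
    move=> a; rewrite -cSP => /imsetP[v vS ->]; rewrite /g ffunE.
    case: pickP => [w /andP[wS /eqP cw]|none]; first by [].
    by have := none v; rewrite vS eqxx.
  exists g.
    apply/pfamilyP; split.
      apply/subsetP => a; rewrite inE /g ffunE.
      case: pickP => [w /andP[wS /eqP cw] _|_]; last by rewrite eqxx.
      by rewrite -cSP -cw imset_f.
    by move=> a aP; have [_ ca] := gP a aP; rewrite inE ca.
  apply/setP => v; apply/idP/imsetP.
    move=> vS; have cvP : col v \in P by rewrite -cSP imset_f.
    exists (col v) => //.
    have [gS gc] := gP (col v) cvP.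
    by apply: same => //; rewrite gc.
  by move=> [a aP ->]; have [gS _] := gP a aP.
move=> [g hg ->].
have injg : {in P &, injective g}.
  by move=> a b aP bP E; rewrite -(gaP _ hg a aP) E (gaP _ hg b bP).
rewrite (card_in_imset injg) eqxx andbT.
apply/andP; split.
  apply/forall_inP => u /imsetP[a aP ->]; apply/forall_inP => v /imsetP[b bP ->].
  apply/implyP => neq; rewrite He (gaP _ hg a aP) (gaP _ hg b bP).
  by apply: contra neq => /eqP ->.
apply/eqP/setP => c; apply/imsetP/idP.
  by move=> [v /imsetP[a aP ->] ->]; rewrite (gaP _ hg a aP).
move=> cP; exists (g c); first exact: imset_f.
by rewrite (gaP _ hg c cP).
Qed.

Lemma multipartite_count (V : finType) (k : nat) (col : V -> 'I_k) (e : rel V)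
  (He : forall u v, e u v = (col u != col v)) (s : nat)
  (Hs : forall a, #|[set v | col v == a]| = s) (y0 : V) (t : nat) :
  k_t e t = ('C(k, t) * s ^ t)%N.
Proof.
rewrite /k_t -sum1_card.
rewrite (eq_bigl (fun S : {set V} => is_clique e S && (#|S| == t))); last by move=> S; rewrite inE.
rewrite (partition_big (fun S : {set V} => col @: S) (fun P : {set 'I_k} => #|P| == t)) /=; last first.
  move=> S /andP[cS /eqP sS]; rewrite card_in_imset ?sS //.
  move=> u v uS vS cuv; apply/eqP/negP => /negP uv.
  by have := cliqueP cS uS vS uv; rewrite He cuv eqxx.
rewrite (eq_bigr (fun _ => s ^ t)%N); last first.
  move=> P /eqP tP; rewrite -tP -(fiber_count He Hs y0 P) -sum1_card.
  by apply: eq_bigl => S; rewrite inE tP.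
have := card_draws 'I_k t; rewrite card_ord => <-.
by rewrite -sum_nat_const; apply: eq_bigl => P; rewrite inE.
Qed.

Definition tcol (n om : nat) (om0 : (0 < om)%N) (v : 'I_n) : 'I_om :=
  Ordinal (ltn_pmod v om0).

Lemma tur_He (n om : nat) (om0 : (0 < om)%N) :
  forall u v : 'I_n, turan_rel n om u v = (tcol om0 u != tcol om0 v).
Proof. by []. Qed.

Lemma tur_lt (n om s a j : nat) : n = (s * om)%N -> (a < om)%N -> (j < s)%N ->
  (a + j * om < n)%N.
Proof. move=> -> ha hj; nia. Qed.

Lemma tur_fiber (n om s : nat) (om0 : (0 < om)%N) (Hn : n = (s * om)%N) (a : 'I_om) :
  #|[set v : 'I_n | tcol om0 v == a]| = s.
Proof.
pose h := fun j : 'I_s => Ordinal (tur_lt Hn (ltn_ord a) (ltn_ord j)).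
have hinj : injective h.
  move=> j1 j2 /(congr1 val) /= E; apply: val_inj => /=.
  by apply/eqP; rewrite -(eqn_pmul2r om0) -(eqn_add2l a) E.
rewrite -(card_ord s) -(card_imset _ hinj); apply: eq_card => v.
rewrite [in LHS]inE; apply/eqP/imsetP.
  move=> /(congr1 val) /= va.
  have js : (v %/ om < s)%N by rewrite ltn_divLR // -Hn.
  exists (Ordinal js) => //; apply: val_inj => /=.
  by rewrite {1}(divn_eq v om) va addnC.
move=> [j _ ->]; apply: val_inj => /=.
by rewrite addnC modnMDl modn_small.
Qed.

Lemma tur_in_class (n om s : nat) (om0 : (0 < om)%N) (Hn : n = (s * om)%N) :
  in_class (s * (om - 1)) om (turan_rel n om).
Proof.
split; first by split; [move=> u v; rewrite /turan_rel eq_sym | move=> u; rewrite /turan_rel eqxx].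
split.
  move=> v; rewrite /deg.
  set A := [set u : 'I_n | tcol om0 u == tcol om0 v].
  have -> : [set u | turan_rel n om v u] = ~: A.
    by apply/setP => u; rewrite !inE tur_He eq_sym.
  have := cardsC A; rewrite {1}/A (tur_fiber om0 Hn) card_ord => E.
  have -> : #|~: A| = (n - s)%N by lia.
  by rewrite Hn mulnBr muln1.
move=> S cS.
have inj : {in S &, injective (tcol om0)}.
  move=> u v uS vS cuv; apply/eqP/negP => /negP uv.
  by have := cliqueP cS uS vS uv; rewrite tur_He cuv eqxx.
rewrite -(card_in_imset inj); apply: leq_trans (max_card _) _.
by rewrite card_ord.
Qed.

Lemma tur_k (n om s t : nat) (om0 : (0 < om)%N) (Hn : n = (s * om)%N) (y0 : 'I_n) :
  k_t (turan_rel n om) t = ('C(om, t) * s ^ t)%N.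
Proof.
exact: (multipartite_count (tur_He om0) (tur_fiber om0 Hn) y0).
Qed.

Lemma triv_class (Delta omega t : nat) : (1 <= omega)%N -> (2 <= t)%N ->
  in_class Delta omega (fun _ _ : 'I_1 => false) /\
  rho_t (fun _ _ : 'I_1 => false) t = 0.
Proof.
move=> om1 t2; split.
  split; first by split.
  split.
    move=> v; rewrite /deg.
    suff -> : #|[set u | (fun _ _ : 'I_1 => false) v u]| = 0%N by [].
    by apply/eqP; rewrite cards_eq0; apply/eqP/setP => u; rewrite !inE.
  move=> S _; apply: leq_trans (max_card _) _; by rewrite card_ord.
have k0 : forall e : rel 'I_1, k_t e t = 0%N.
  move=> e.
  apply/eqP; rewrite cards_eq0; apply/eqP/setP => S; rewrite !inE.
  have := max_card (mem S); rewrite card_ord => h.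
  apply/negbTE; apply/negP => /andP[_ /eqP St].
  by move: h; rewrite -/(#|S|) St; lia.
by rewrite /rho_t k0 mul0r.
Qed.

Lemma main_aux (Delta omega t : nat) :
  (2 <= omega)%N -> (2 <= t <= omega)%N -> (omega - 1 %| Delta)%N ->
  let n := (Delta + Delta %/ (omega - 1))%N in
  is_f_t t Delta omega (rho_t (turan_rel n omega) t) /\
  rho_t (turan_rel n omega) t =
    ((t%:R)^-1 * ('C(omega - 1, t - 1))%:R *
       ((Delta%:R / (omega - 1)%:R) ^+ (t - 1)) : rat)%R.
Proof.
move=> om2 /andP[t2 tom] dvd n.
have om0 : (0 < omega)%N by lia.
have p0 : (0 < omega - 1)%N by lia.
set s := (Delta %/ (omega - 1))%N.
have Ds : Delta = (s * (omega - 1))%N by rewrite /s divnK.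
have Hn : n = (s * omega)%N.
  rewrite /n -/s {1}Ds mulnBr muln1 subnK //.
  by rewrite leq_pmulr.
clearbody s.
case: t t2 tom => [|r] // t2 tom.
have -> : (r.+1 - 1 = r)%N by rewrite subn1.
have r0 : (r != 0)%N by rewrite -lt0n.
have rho0 : s = 0%N -> rho_t (turan_rel n omega) r.+1 = 0.
  move=> s0; have n0 : n%:R = 0 :> rat by rewrite Hn s0.
  by rewrite /rho_t card_ord n0 invr0 mulr0.
have eqF : rho_t (turan_rel n omega) r.+1 =
    (r.+1%:R)^-1 * ('C(omega - 1, r))%:R * (Delta%:R / (omega - 1)%:R) ^+ r.
  case: (posnP s) => [s0|spos].
    rewrite rho0 // Ds s0 mul0n mul0r expr0n (negbTE r0); by rewrite mulr0.
  have n0 : (0 < n)%N by rewrite Hn muln_gt0 spos om0.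
  rewrite /rho_t (tur_k r.+1 om0 Hn (Ordinal n0)) card_ord.
  have nR : n%:R = s%:R * omega%:R :> rat by rewrite Hn natrM.
  have pR : (omega - 1)%:R != 0 :> rat by rewrite pnatr_eq0 -lt0n.
  have DR : Delta%:R / (omega - 1)%:R = s%:R :> rat by rewrite Ds natrM mulfK.
  have bin : ('C(omega, r.+1))%:R = omega%:R * ('C(omega - 1, r))%:R / r.+1%:R :> rat.
    have := mul_bin_diag omega r; rewrite -subn1 => /(congr1 (fun k => k%:R : rat)).
    by rewrite !natrM => E; rewrite E [_ * 'C(_, _)%:R]mulrC mulfK // pnatr_eq0.
  have sR : s%:R != 0 :> rat by rewrite pnatr_eq0 -lt0n.
  have oR : omega%:R != 0 :> rat by rewrite pnatr_eq0 -lt0n.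
  have r1 : r.+1%:R != 0 :> rat by rewrite pnatr_eq0.
  rewrite natrM natrX nR DR bin exprS; field.
  by rewrite sR oR addrC natr1 r1.
split => //.
split.
  by move=> V e hc V0; rewrite eqF; exact: rho_bound hc V0.
move=> y hy.
case: (posnP s) => [s0|spos].
  rewrite rho0 //.
  have [hc h0] := @triv_class Delta omega r.+1 (ltnW om2) t2.
  have h1 : (0 < #|'I_1|)%N by rewrite card_ord.
  by have := hy _ _ hc h1; rewrite h0.
apply: hy.
  by have := tur_in_class om0 Hn; rewrite -Ds.
by rewrite card_ord Hn muln_gt0 spos om0.
Qed.

Local Close Scope ring_scope.
Unset Implicit Arguments.

Theorem mainTheorem5 (Delta omega t : nat) :
  2 <= omega -> 2 <= t <= omega -> (omega - 1 %| Delta)%N ->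
  let n := (Delta + Delta %/ (omega - 1))%N in
  is_f_t t Delta omega (rho_t (turan_rel n omega) t) /\
  rho_t (turan_rel n omega) t =
    ((t%:R)^-1 * ('C(omega - 1, t - 1))%:R *
       ((Delta%:R / (omega - 1)%:R) ^+ (t - 1)) : rat)%R.
Proof. exact: main_aux. Qed.
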